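(* Let $0<a<1/2$, $a+1/2<b<1$, $K(n)\sim n^a$, $C_n=e^{n^{b-a}}$, and $$\mathcal F_n=\{(\theta_n,\rho):|\theta_{in}|\le C_n,\ i=1,\dots,K(n),\ |\rho|\le\log C_n\}.$$ With prior $p(\omega_n)=(2\pi\eta^2)^{-1/2}e^{-\rho^2/(2\eta^2)}\prod_{i=1}^{K(n)}(2\pi\zeta^2)^{-1/2}e^{-\theta_{in}^2/(2\zeta^2)}$ on $\omega_n=(\theta_n,\rho)$ (with $\eta,\zeta>0$ fixed), for every $\kappa>0$ we have $\int_{\mathcal F_n^c}p(\omega_n)d\omega_n\le e^{-n\kappa}$ for all sufficiently large $n$.
   Context: $\theta_n=(\theta_{1n},\dots,\theta_{K(n)n})\in\mathbb R^{K(n)}$ is the vector of network parameters and $\rho\in\mathbb R$ is the reparametrized scale parameter ($\sigma=\log(1+e^\rho)$); $K(n)\sim n^a$ means $K(n)$ grows at the rate $n^a$. *)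

(* Defs.v *)
From HB Require Import structures.
From mathcomp Require Import all_boot all_order all_algebra.
From mathcomp Require Import all_classical all_reals all_analysis.
Set Implicit Arguments. Unset Strict Implicit. Unset Printing Implicit Defensive.
Import Order.TTheory GRing.Theory Num.Theory.
Local Open Scope classical_set_scope.
Local Open Scope ring_scope.
Local Open Scope ereal_scope.

(* Iterated Lebesgue integral over R^k of a nonnegative extended-real
   function of a list of k reals (Tonelli form of the integral over R^k
   w.r.t. Lebesgue measure). *)
Fixpoint iter_integral (R : realType) (k : nat) (f : seq R -> \bar R) : \bar R :=
  match k with
  | 0 => f [::]
  | k'.+1 => \int[@lebesgue_measure R]_x iter_integral k' (fun v => f (x :: v))
  end.

Local Close Scope ereal_scope.

Definition gauss_dens (R : realType) (s x : R) : R :=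
  (Num.sqrt (2 * pi * s ^+ 2))^-1 * expR (- (x ^+ 2) / (2 * s ^+ 2)).

(* Parameter vector omega = (rho, theta_1, ..., theta_K) encoded as the list
   rho :: theta.  Prior density p(omega). *)
Definition prior_density (R : realType) (eta zeta : R) (w : seq R) : R :=
  match w with
  | [::] => 0
  | rho :: theta => gauss_dens eta rho * \prod_(t <- theta) gauss_dens zeta t
  end.

Definition sieve (R : realType) (C : R) : set (seq R) :=
  [set w | match w with
           | [::] => False
           | rho :: theta => `|rho| <= ln C /\ (forall t, t \in theta -> `|t| <= C)
           end].

Definition Cn (R : realType) (a b : R) (n : nat) : R := expR (n%:R `^ (b - a)).

Definition prior_mass_outside (R : realType) (eta zeta C : R) (K : nat) : \bar R :=
  iter_integral K.+1 (fun w => (\1_(~` sieve C) w * prior_density eta zeta w)%:E).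

(* Main.v *)
Require Import Defs.
From HB Require Import structures.
From mathcomp Require Import all_boot all_order all_algebra.
From mathcomp Require Import all_classical all_reals all_analysis.
From mathcomp Require Import ring lra.
Set Implicit Arguments. Unset Strict Implicit. Unset Printing Implicit Defensive.
Import Order.TTheory GRing.Theory Num.Theory.
Local Open Scope classical_set_scope.
Local Open Scope ring_scope.

Section S.
Variable R : realType.
Local Notation mu := (@lebesgue_measure R).

Lemma le_int_nm (f g : R -> \bar R) : (forall x, (0 <= f x)%E) ->
  (forall x, (f x <= g x)%E) -> (\int[mu]_x f x <= \int[mu]_x g x)%E.
Proof.
move=> f0 fg.
have g0 : forall x, (0 <= g x)%E by move=> x; exact: le_trans (f0 x) (fg x).
rewrite ge0_integralTE // ge0_integralTE //.
apply: ereal_sup_le => _ [h hf <-]; exists h => //= x.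
exact: le_trans (hf x) (fg x).
Qed.

Lemma iter_ge0 k (f : seq R -> \bar R) : (forall v, (0 <= f v)%E) -> (0 <= iter_integral k f)%E.
Proof.
elim: k f => [|k IH] f f0 //=.
by apply: integral_ge0 => x _; apply: IH.
Qed.

Lemma iter_le k (f g : seq R -> \bar R) : (forall v, (0 <= f v)%E) ->
  (forall v, (f v <= g v)%E) -> (iter_integral k f <= iter_integral k g)%E.
Proof.
elim: k f g => [|k IH] f g f0 fg //=.
apply: le_int_nm => x; first by apply: iter_ge0.
by apply: IH.
Qed.

Lemma gaussE (s : R) : s != 0 -> gauss_dens s = normal_pdf 0 s.
Proof.
move=> s0; apply/funext => x.
rewrite normal_pdfE //= /normal_peak /normal_fun subr0.
congr (_ ^-1 * expR (_ / _)); first (congr Num.sqrt); by rewrite mulr2n; ring.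
Qed.

Lemma int_two (s1 s2 al be : R) : s1 != 0 -> s2 != 0 ->
  (\int[mu]_x ((al * gauss_dens s1 x + be * gauss_dens s2 x)%:E) = (al + be)%:E)%E.
Proof.
move=> h1 h2; rewrite (gaussE h1) (gaussE h2).
under eq_integral do rewrite EFinD !EFinM.
rewrite integralD //=.
- rewrite integralZl //=; last exact: integrable_normal_pdf.
  rewrite integralZl //=; last exact: integrable_normal_pdf.
  by rewrite !integral_normal_pdf !mule1.
- by apply: integrableZl => //; exact: integrable_normal_pdf.
- by apply: integrableZl => //; exact: integrable_normal_pdf.
Qed.

Lemma gauss_ge0 (s x : R) : 0 <= gauss_dens s x.
Proof. by rewrite /gauss_dens mulr_ge0 ?invr_ge0 ?sqrtr_ge0 ?expR_ge0. Qed.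

Lemma tail_pt (s L x : R) : 0 < s -> 0 <= L ->
  (if L < `|x| then 1 else 0) * gauss_dens s x <=
  Num.sqrt 2 * expR (- (L ^+ 2) / (4 * s ^+ 2)) * gauss_dens (Num.sqrt 2 * s) x.
Proof.
move=> s0 L0; have [Lx|_] := ltP L `|x|; last first.
  by rewrite mul0r mulr_ge0 ?gauss_ge0 // mulr_ge0 ?sqrtr_ge0 ?expR_ge0.
have s2 : Num.sqrt 2 ^+ 2 = 2 :> R by rewrite sqr_sqrtr.
have sp : 0 < Num.sqrt 2 :> R by rewrite sqrtr_gt0.
have pi0 : 0 < pi :> R by exact: pi_gt0.
have hc : Num.sqrt (2 * pi * (Num.sqrt 2 * s) ^+ 2) = Num.sqrt 2 * Num.sqrt (2 * pi * s ^+ 2).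
  rewrite -sqrtrM //; congr Num.sqrt; rewrite exprMn s2; ring.
rewrite mul1r /gauss_dens hc exprMn s2.
set c := Num.sqrt (2 * pi * s ^+ 2).
have c0 : 0 < c by rewrite sqrtr_gt0 mulr_gt0 // ?mulr_gt0 // exprn_gt0.
have -> : Num.sqrt 2 * expR (- L ^+ 2 / (4 * s ^+ 2)) *
   ((Num.sqrt 2 * c)^-1 * expR (- x ^+ 2 / (2 * (2 * s ^+ 2))))
   = c^-1 * (expR (- L ^+ 2 / (4 * s ^+ 2)) * expR (- x ^+ 2 / (2 * (2 * s ^+ 2)))).
  by field; rewrite (gt_eqF c0) (gt_eqF sp).
apply: ler_wpM2l; first by rewrite invr_ge0 ltW.
rewrite -expRD ler_expR.
have hL : L ^+ 2 <= x ^+ 2.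
  rewrite -[x ^+ 2]real_normK ?num_real //; have := normr_ge0 x; nra.
have s20 : 0 < s ^+ 2 by rewrite exprn_gt0.
rewrite -subr_ge0.
have -> : - L ^+ 2 / (4 * s ^+ 2) + - x ^+ 2 / (2 * (2 * s ^+ 2)) - (- x ^+ 2 / (2 * s ^+ 2))
   = (x ^+ 2 - L ^+ 2) / (4 * s ^+ 2).
  by field; rewrite gt_eqF.
by rewrite divr_ge0 ?subr_ge0 // mulr_ge0 // ltW.
Qed.

Lemma ge0E (x : R) : 0 <= x -> (0 <= x%:E)%E.
Proof. by rewrite lee_fin. Qed.

Section Ind.
Variables (zeta C : R).
Hypothesis z0 : 0 < zeta.
Hypothesis C0 : 0 <= C.

Definition PP (th : seq R) := \prod_(t <- th) gauss_dens zeta t.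
Definition QQ (th : seq R) := (if has (fun t => C < `|t|) th then 1 else 0) * PP th.
Definition tau := Num.sqrt 2 * expR (- (C ^+ 2) / (4 * zeta ^+ 2)).

Lemma PP_ge0 th : 0 <= PP th.
Proof. by apply: prodr_ge0 => t _; exact: gauss_ge0. Qed.

Lemma QQ_ge0 th : 0 <= QQ th.
Proof. by rewrite /QQ mulr_ge0 ?PP_ge0 //; case: ifP. Qed.

Lemma tau_ge0 : 0 <= tau.
Proof. by rewrite /tau mulr_ge0 ?sqrtr_ge0 ?expR_ge0. Qed.

Lemma alg (a b g p : R) (c1 c2 : bool) : 0 <= a -> 0 <= b -> 0 <= g -> 0 <= p ->
  a * (g * p) + b * ((if c1 || c2 then 1 else 0) * (g * p)) <=
  (a * g + b * ((if c1 then 1 else 0) * g)) * p + (b * g) * ((if c2 then 1 else 0) * p).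
Proof.
move=> a0 b0 g0 p0; have h1 := mulr_ge0 (mulr_ge0 b0 g0) p0.
by case: c1; case: c2 => /=; rewrite ?mul1r ?mul0r ?mulr0 ?mulr1 ?addr0 ?add0r !mulrA ?mulrDl; lra.
Qed.

Ltac pos := repeat first [ exact: PP_ge0 | exact: QQ_ge0 | exact: gauss_ge0 | exact: tau_ge0 | assumption | apply: addr_ge0 | apply: mulr_ge0 ].

Lemma iterPQ k (a b : R) : 0 <= a -> 0 <= b ->
  (iter_integral k (fun v => (a * PP v + b * QQ v)%:E) <= (a + b * k%:R * tau)%:E)%E.
Proof.
elim: k a b => [|k IH] a b a0 b0.
  by rewrite /= /QQ /PP big_nil /= lee_fin !mulr0 !mul0r mulr0 mulr1 addr0.
rewrite /=.
have z0' : Num.sqrt 2 * zeta != 0 by rewrite mulf_neq0 ?gt_eqF ?sqrtr_gt0.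
have -> : a + b * k.+1%:R * tau = (a + b * k%:R * tau) + b * tau.
  by rewrite -natr1; ring.
rewrite -(int_two (a + b * k%:R * tau) (b * tau) (negbT (gt_eqF z0)) z0').
apply: le_int_nm => x.
  by apply: iter_ge0 => v; apply: ge0E; apply: addr_ge0; apply: mulr_ge0 => //; [exact: PP_ge0 | exact: QQ_ge0].
have gx0 := gauss_ge0 zeta x.
have h := tail_pt x z0 C0; rewrite -/tau in h.
have g'0 := gauss_ge0 (Num.sqrt 2 * zeta) x.
set ix : R := if C < `|x| then 1 else 0 in h *.
have ix0 : 0 <= ix by rewrite /ix; case: ifP.
apply: (@le_trans _ _ (iter_integral k (fun v => ((a * gauss_dens zeta x + b * (ix * gauss_dens zeta x)) * PP v + (b * gauss_dens zeta x) * QQ v)%:E))).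
  apply: iter_le => v; first by apply: ge0E; pos.
  rewrite lee_fin /QQ /PP big_cons -/(PP v) /=.
  by apply: alg => //; exact: PP_ge0.
move: h g'0; set g' := gauss_dens (Num.sqrt 2 * zeta) x => h g'0.
move: gx0 h; set gx := gauss_dens zeta x => gx0 h.
clearbody gx g' ix.
apply: le_trans; first (apply: IH; pos).
rewrite lee_fin.
have := tau_ge0; have : 0 <= k%:R :> R by [].
nra.
Qed.
End Ind.
Lemma indic_le (C rho : R) th :
  \1_(~` sieve C) (rho :: th) <=
  ((if ln C < `|rho| then 1 else 0) : R) + ((if has (fun t => C < `|t|) th then 1 else 0) : R).
Proof.
rewrite indicE; have [/set_mem hc|] := boolP (rho :: th \in ~` sieve C); last first.
  by move=> _; rewrite /=; case: (ln C < `|rho|); case: (has _ th); lra.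
case h1: (ln C < `|rho|); case h2: (has _ th); rewrite /=; try lra.
exfalso; apply: hc; split; first by rewrite leNgt h1.
move=> t tin; rewrite leNgt; apply/negP => ht.
by move/negbT: h2 => /hasPn /(_ t tin) /negP; apply.
Qed.
Lemma main_bound (eta zeta C : R) (K : nat) : 0 < eta -> 0 < zeta -> 1 <= C ->
  (prior_mass_outside eta zeta C K <=
   (K%:R * tau zeta C + Num.sqrt 2 * expR (- (ln C ^+ 2) / (4 * eta ^+ 2)))%:E)%E.
Proof.
move=> e0 z0 C1.
have C0 : 0 <= C by apply: le_trans C1.
have L0 : 0 <= ln C by exact: ln_ge0.
have e' : Num.sqrt 2 * eta != 0 by rewrite mulf_neq0 ?gt_eqF ?sqrtr_gt0.
rewrite /prior_mass_outside /=.
rewrite -(int_two (K%:R * tau zeta C) _ (negbT (gt_eqF e0)) e').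
apply: le_int_nm => rho.
  apply: iter_ge0 => v; apply: ge0E; apply: mulr_ge0.
    by rewrite indicE; case: (_ \in _).
  by rewrite /prior_density; apply: mulr_ge0; [exact: gauss_ge0|exact: PP_ge0].
have h := tail_pt rho e0 L0.
have g0 := gauss_ge0 eta rho.
have g'0 := gauss_ge0 (Num.sqrt 2 * eta) rho.
have ta0 := tau_ge0 zeta C.
set ir : R := if ln C < `|rho| then 1 else 0 in h *.
have ir0 : 0 <= ir by rewrite /ir; case: ifP.
apply: (@le_trans _ _ (iter_integral K (fun v => ((ir * gauss_dens eta rho) * PP zeta v + gauss_dens eta rho * QQ zeta C v)%:E))).
  apply: iter_le => v.
    apply: ge0E; apply: mulr_ge0; first by rewrite indicE; case: (_ \in _).
    by apply: mulr_ge0; [exact: gauss_ge0|exact: PP_ge0].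
  rewrite lee_fin /prior_density -/(PP zeta v).
  have hi := indic_le C rho v; rewrite -/ir in hi.
  have p0 := mulr_ge0 g0 (PP_ge0 zeta v).
  apply: le_trans; first exact: (ler_wpM2r p0 hi).
  by rewrite /QQ le_eqVlt; apply/orP; left; apply/eqP; ring.
apply: le_trans; first (apply: iterPQ => //; exact: mulr_ge0).
rewrite lee_fin.
move: h g0 g'0; set g := gauss_dens eta rho; set g' := gauss_dens _ rho => h g0 g'0.
have : 0 <= K%:R :> R by [].
nra.
Qed.
Lemma divle (A A' B B' : R) : 0 <= A -> A <= A' -> 0 < B' -> B' <= B -> A / B <= A' / B'.
Proof.
move=> A0 AA B0 BB; have B0' : 0 < B by apply: lt_le_trans BB.
apply: ler_pM => //; first by rewrite invr_ge0 ltW.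
by rewrite lef_pV2 ?posrE.
Qed.

Lemma expN_le (A A' B B' : R) : 0 <= A -> A <= A' -> 0 < B' -> B' <= B ->
  expR (- A' / B') <= expR (- A / B).
Proof.
move=> *; rewrite ler_expR !mulNr lerN2; exact: divle.
Qed.

Lemma numeric (eta zeta kappa c2 a b : R) (n K : nat) :
  0 < eta -> 0 < zeta -> 0 < kappa -> 0 < c2 -> 0 < a -> a < 1 -> 0 < 2 * (b - a) - 1 ->
  (1 <= n)%N -> K%:R <= c2 * n%:R `^ a ->
  4 * (eta ^+ 2 + zeta ^+ 2) * (kappa + 2 + 2 * c2) <= n%:R `^ (2 * (b - a) - 1) ->
  K%:R * tau zeta (Cn a b n) + Num.sqrt 2 * expR (- (ln (Cn a b n) ^+ 2) / (4 * eta ^+ 2))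
    <= expR (- (n%:R * kappa)).
Proof.
move=> e0 z0 k0 c0 a0 a1 d0 n1 hK hM.
set x : R := n%:R.
have x1 : 1 <= x by rewrite /x ler1n.
have x0 : 0 < x by apply: lt_le_trans x1.
set L := x `^ (b - a).
have L0 : 0 <= L by exact: powR_ge0.
rewrite /Cn expRK -/L /tau.
have hC : L ^+ 2 <= expR L ^+ 2.
  have := expR_ge1Dx L; nra.
set s := eta ^+ 2 + zeta ^+ 2.
have e2 : 0 < eta ^+ 2 by rewrite exprn_gt0.
have z2 : 0 < zeta ^+ 2 by rewrite exprn_gt0.
have s0 : 0 < s by rewrite /s addr_gt0.
set E := expR (- (L ^+ 2) / (4 * s)).
have E0 : 0 <= E by exact: expR_ge0.
have h1 : expR (- (expR L ^+ 2) / (4 * zeta ^+ 2)) <= E.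
  apply: expN_le => //; first by rewrite sqr_ge0.
    by rewrite mulr_gt0.
  rewrite ler_pM2l //; rewrite /s; lra.
have h2 : expR (- (L ^+ 2) / (4 * eta ^+ 2)) <= E.
  apply: expN_le => //; first by rewrite sqr_ge0.
    by rewrite mulr_gt0.
  rewrite ler_pM2l //; rewrite /s; lra.
have sq2 : Num.sqrt 2 <= 2 :> R.
  have := sqr_sqrtr (ler0n R 2); have := sqrtr_ge0 (2 : R); nra.
have sq0 : 0 <= Num.sqrt 2 :> R := sqrtr_ge0 2.
have K0 : 0 <= K%:R :> R by [].
have step1 : K%:R * (Num.sqrt 2 * expR (- expR L ^+ 2 / (4 * zeta ^+ 2))) +
    Num.sqrt 2 * expR (- L ^+ 2 / (4 * eta ^+ 2)) <= 2 * (K%:R + 1) * E.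
  have hA := ler_pM sq0 (expR_ge0 _) sq2 h1.
  have hB := ler_pM sq0 (expR_ge0 _) sq2 h2.
  have hKA := ler_wpM2l K0 hA.
  lra.
apply: le_trans step1 _.
set d := 2 * (b - a) - 1 in hM d0 *.
have hL2 : L ^+ 2 = x * x `^ d.
  rewrite -powR_mulrn // -powRrM.
  have -> : (b - a) * 2%:R = 1 + d by rewrite /d; ring.
  rewrite powRD; last by apply/implyP => _; rewrite gt_eqF.
  by rewrite powRr1 // ltW.
have hxa : x `^ a <= x by apply: ler1_powR => //; exact: ltW.
have hKx : K%:R <= c2 * x by apply: (le_trans hK); rewrite ler_wpM2l // ltW.
set y : R := 2 * (K%:R + 1).
have y0 : 0 <= y by rewrite /y; lra.
have hy : y <= x * (2 + 2 * c2) by rewrite /y; lra.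
have hexp : x * kappa + y <= L ^+ 2 / (4 * s).
  rewrite ler_pdivlMr ?mulr_gt0 // hL2.
  have hxM := ler_wpM2l (ltW x0) hM.
  have s4 : 0 <= 4 * s by rewrite mulr_ge0 // ltW.
  have hy4 := ler_wpM2r s4 hy.
  rewrite -/x -/s in hxM; lra.
have hE : E <= expR (- (x * kappa)) * expR (- y).
  rewrite -expRD ler_expR mulNr; lra.
have hy1 : y * expR (- y) <= 1.
  rewrite expRN ler_pdivrMr ?expR_gt0 // mul1r.
  have := expR_ge1Dx y; lra.
have := ler_wpM2l y0 hE.
have := ler_wpM2r (expR_ge0 (- (x * kappa))) hy1.
rewrite -/y mul1r; lra.
Qed.
End S.

Local Close Scope classical_set_scope.

Theorem lemma20 (R : realType) (a b eta zeta : R) (K : nat -> nat) :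
  0 < a -> a < 1 / 2 -> a + 1 / 2 < b -> b < 1 ->
  0 < eta -> 0 < zeta ->
  (exists c1 c2 : R, 0 < c1 /\ 0 < c2 /\ exists N : nat, forall n : nat, (N <= n)%N ->
     c1 * n%:R `^ a <= (K n)%:R /\ (K n)%:R <= c2 * n%:R `^ a) ->
  forall kappa : R, 0 < kappa ->
  exists N : nat, forall n : nat, (N <= n)%N ->
    (prior_mass_outside eta zeta (Cn a b n) (K n) <= (expR (- (n%:R * kappa)))%:E)%E.
Proof.
move=> a0 a12 ab b1 e0 z0 [c1 [c2 [c10 [c20 [N0 hN0]]]]] kappa k0.
set d := 2 * (b - a) - 1.
have d0 : 0 < d by rewrite /d; lra.
set M := 4 * (eta ^+ 2 + zeta ^+ 2) * (kappa + 2 + 2 * c2).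
have M0 : 0 <= M.
  rewrite /M mulr_ge0 // ?mulr_ge0 ?addr_ge0 ?sqr_ge0 //; lra.
set X := M `^ d^-1.
have X0 : 0 <= X by exact: powR_ge0.
exists (maxn (maxn N0 1) (Num.truncn X).+1) => n.
rewrite !geq_max => /andP [/andP [hn0 hn1] hnX].
have [_ hK] := hN0 n hn0.
have hM : M <= n%:R `^ d.
  have hXn : X <= n%:R.
    apply: le_trans (ltW (truncnS_gt X)) _; by rewrite ler_nat.
  have := ge0_ler_powR (ltW d0) X0 _ hXn; rewrite ?nnegrE => /(_ (ler0n _ _)) h.
  apply: le_trans h; rewrite /X -powRrM mulVf ?gt_eqF // powRr1 //.
have C1 : 1 <= Cn a b n.
  rewrite /Cn; have := expR_ge1Dx (n%:R `^ (b - a)); have := powR_ge0 n%:R (b - a); lra.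
apply: le_trans (main_bound (K n) e0 z0 C1) _.
rewrite lee_fin.
apply: (@numeric R eta zeta kappa c2 a b n (K n)) => //; first by lra.
Qed.
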